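(* Let $t>0$ be an integer. There is a constant $C_t$ such that the following holds. Let $G=(V,E,<)$ be an ordered graph with $|V|\ge 2$ that does not contain two $t$-element vertex subsets $S,T$ such that every $s\in S$ and $w\in T$ form a double cherry. Then $|E|\le C_t|V|\log|V|$.
   Context: An ordered graph is a graph with a linear order on its vertices. Two distinct vertices of an ordered graph form a double cherry if either they are adjacent, or they can be named $u,v$ so that there are vertices $u_1,u_2,v_1,v_2$ with $u_1<u<u_2<v_1<v<v_2$ and edges $(u,v_1),(u,v_2),(v,u_1),(v,u_2)$ in the graph. *)

(* Defs.v *)
From mathcomp Require Import all_boot all_order.
From Stdlib Require Import Reals.
Set Implicit Arguments. Unset Strict Implicit. Unset Printing Implicit Defensive.

(* An ordered graph on n vertices: vertex set 'I_n with its natural order,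
   edges given by a symmetric irreflexive relation. *)
Definition simple_graph (n : nat) (e : rel 'I_n) : Prop :=
  symmetric e /\ irreflexive e.

Definition num_edges (n : nat) (e : rel 'I_n) : nat :=
  #|[set p : 'I_n * 'I_n | (p.1 < p.2) && e p.1 p.2]|.

Definition dcherry_uv (n : nat) (e : rel 'I_n) (u v : 'I_n) : Prop :=
  exists u1 u2 v1 v2 : 'I_n,
    [/\ (u1 < u)%N, (u < u2)%N, (u2 < v1)%N, (v1 < v)%N & (v < v2)%N] /\
    [/\ e u v1, e u v2, e v u1 & e v u2].

Definition double_cherry (n : nat) (e : rel 'I_n) (x y : 'I_n) : Prop :=
  x != y /\ (e x y \/ dcherry_uv e x y \/ dcherry_uv e y x).

(* Main.v *)
Require Import Defs.
From mathcomp Require Import all_boot all_order.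
From mathcomp Require Import zify.
Set Implicit Arguments. Unset Strict Implicit. Unset Printing Implicit Defensive.

Lemma inj_card_le n (B : {set 'I_n}) (g : 'I_n -> nat) k :
  {in B &, injective g} -> {in B, forall c, g c < k} -> #|B| <= k.
Proof.
move=> gi gk.
rewrite cardE -(size_map g).
have -> : k = size (iota 0 k) by rewrite size_iota.
apply: uniq_leq_size.
  rewrite map_inj_in_uniq ?enum_uniq //. move=> x y; rewrite !mem_enum; exact: gi.
move=> y /mapP [x]; rewrite mem_enum => xB ->. rewrite mem_iota /= add0n. exact: gk.
Qed.

Lemma sub_card_t (T : finType) (A : {set T}) t :
  t <= #|A| -> exists B : {set T}, B \subset A /\ #|B| = t.
Proof.
move=> ht. exists [set x in take t (enum A)]. split.
  apply/subsetP => x; rewrite inE => /mem_take; by rewrite mem_enum.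
rewrite cardsE (card_uniqP _) ?take_uniq ?enum_uniq // size_take -cardE.
by case: ltnP => // h; apply/eqP; rewrite eqn_leq ht h.
Qed.

Definition cnt n (A : {set 'I_n}) (c d : nat) := #|[set y in A | c <= y < d]|.

Lemma cnt_mono n (A : {set 'I_n}) c d d' : d <= d' -> cnt A c d <= cnt A c d'.
Proof.
move=> h; apply: subset_leq_card; apply/subsetP => y; rewrite !inE.
case/and3P => -> -> /= yd; exact: leq_trans yd h.
Qed.

Lemma cnt_step n (A : {set 'I_n}) c d :
  cnt A c d.+1 <= (cnt A c d).+1 /\
  (cnt A c d < cnt A c d.+1 -> exists2 y, y \in A & (c <= y) && (val y == d)).
Proof.
have E : [set y in A | c <= y < d.+1] =
   [set y in A | c <= y < d] :|: [set y in A | (c <= y) && (val y == d)].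
  apply/setP => y; rewrite !inE ltnS [y <= d]leq_eqVlt.
  by case: (y \in A); case: (c <= y); rewrite //= orbC.
split.
  rewrite /cnt E cardsU. apply: leq_trans (leq_subr _ _) _.
  rewrite -addn1 leq_add2l.
  have Hs : [set y in A | (c <= y) && (val y == d)] \subset [set y : 'I_n | val y == d].
    by apply/subsetP => y; rewrite !inE => /andP[_ /andP[_ ->]].
  apply: (leq_trans (subset_leq_card Hs)).
  case: (ltnP d n) => hd.
    have -> : [set y : 'I_n | val y == d] = [set Ordinal hd].
      by apply/setP => y; rewrite !inE.
    by rewrite cards1.
  have -> : [set y : 'I_n | val y == d] = set0.
    apply/setP => y; rewrite !inE.
    apply/negP => /eqP ey. move: (ltn_ord y); rewrite ey; lia.
  by rewrite cards0.
move=> hlt.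
have : [set y in A | (c <= y) && (val y == d)] != set0.
  apply/negP => /eqP E0. move: hlt; rewrite /cnt E E0 setU0. by rewrite ltnn.
case/set0Pn => y; rewrite !inE => /andP[yA H]; by exists y.
Qed.

Lemma rank_exists n (A : {set 'I_n}) c k m :
  k.+1 <= cnt A c m -> exists y, [/\ y \in A, c <= y & cnt A c y = k].
Proof.
elim: m => [|m IH].
  rewrite /cnt. move=> h. have : [set y in A | c <= y < 0] = set0.
    by apply/setP => y; rewrite !inE ltn0 !andbF.
  by move=> E; move: h; rewrite E cards0.
move=> h. case: (leqP k.+1 (cnt A c m)) => h2; first exact: IH.
have [s1 s2] := cnt_step A c m.
have hl : cnt A c m < cnt A c m.+1 by lia.
case: (s2 hl) => y yA /andP[cy /eqP ym].
exists y; split => //. rewrite ym. lia.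
Qed.

Lemma cnt_all n (A : {set 'I_n}) c : cnt A c n = #|[set y in A | c <= y]|.
Proof. rewrite /cnt; apply: eq_card => y; by rewrite !inE ltn_ord andbT. Qed.

Lemma first_big n (A : {set 'I_n}) c k :
  k <= cnt A c n -> k <= #|[set y in A | (c <= y) && (cnt A c y < k)]|.
Proof.
elim: k => [//|k IH] h.
have := IH (ltnW h). move=> hk.
case: (rank_exists h) => y [yA cy ry].
have Hsub : y |: [set y in A | (c <= y) && (cnt A c y < k)] \subset
            [set y in A | (c <= y) && (cnt A c y < k.+1)].
  apply/subsetP => z; rewrite !inE. case/orP.
    by move/eqP => ->; rewrite yA cy ry ltnSn.
  case/andP => -> /andP[-> h3] /=. lia.
apply: (leq_trans _ (subset_leq_card Hsub)).
rewrite cardsU1 !inE ry ltnn !andbF /= add1n ltnS. exact: hk.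
Qed.

Lemma card_sum (T : finType) (P : pred T) : #|[set x | P x]| = \sum_x (P x : nat).
Proof.
rewrite -sum1_card big_mkcond /=; apply: eq_bigr => x _; rewrite inE; by case: (P x).
Qed.

Lemma card_pairs n (P : 'I_n -> 'I_n -> bool) :
  #|[set z : 'I_n * 'I_n | P z.1 z.2]| = \sum_x \sum_y (P x y : nat).
Proof. by rewrite card_sum pair_big. Qed.

Lemma card_val_eq n m : #|[set x : 'I_n | val x == m]| <= 1.
Proof.
case: (ltnP m n) => hd.
  have -> : [set y : 'I_n | val y == m] = [set Ordinal hd].
    by apply/setP => y; rewrite !inE.
  by rewrite cards1.
have -> : [set y : 'I_n | val y == m] = set0.
  apply/setP => y; rewrite !inE.
  apply/negP => /eqP ey. move: (ltn_ord y); rewrite ey; lia.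
by rewrite cards0.
Qed.

Lemma mono_inj n (B : {set 'I_n}) (g : 'I_n -> nat) :
  {in B &, forall c1 c2 : 'I_n, c1 < c2 -> g c2 < g c1} -> {in B &, injective g}.
Proof.
move=> h c1 c2 h1 h2 e; case: (ltngtP c1 c2) => l.
- by move: (h _ _ h1 h2 l); rewrite e ltnn.
- by move: (h _ _ h2 h1 l); rewrite e ltnn.
- exact: val_inj.
Qed.

Definition In_ n (a b p q : 'I_n -> nat) (x y : 'I_n) : bool :=
  (a x < y < b x) && (p y < x < q y).
Definition act n (p q : 'I_n -> nat) (x : nat) : {set 'I_n} :=
  [set y | p y < x < q y].
Definition Win n t (p q : 'I_n -> nat) (x c : nat) : {set 'I_n} :=
  [set y in act p q x | (c <= y) && (cnt (act p q x) c y < t)].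
Definition rowR n (a b p q : 'I_n -> nat) (x : 'I_n) (c : nat) : {set 'I_n} :=
  [set z | In_ a b p q x z && (c <= z)].
Definition good n t (a b p q : 'I_n -> nat) (x c : 'I_n) : bool :=
  In_ a b p q x c && (t <= #|rowR a b p q x c|).

Lemma win_sub_row n t (a b p q : 'I_n -> nat) (x c : 'I_n) :
  good t a b p q x c -> Win t p q x c \subset [set z | In_ a b p q x z].
Proof.
case/andP => /andP [/andP [ac cb] pcq] hR.
apply/subsetP => z; rewrite !inE => /and3P [zact cz hz].
rewrite /In_ zact andbT.
apply/andP; split; first exact: leq_trans ac cz.
rewrite ltnNge; apply/negP => bz.
have : #|rowR a b p q x c| <= cnt (act p q x) c z.
  apply: subset_leq_card; apply/subsetP => w; rewrite !inE.
  case/andP => /andP [/andP [_ wb] wact] cw. rewrite wact cw /=.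
  exact: leq_trans wb bz.
lia.
Qed.

Lemma win_big n t (a b p q : 'I_n -> nat) (x c : 'I_n) :
  good t a b p q x c -> t <= #|Win t p q x c|.
Proof.
case/andP => /andP [/andP [ac cb] pcq] hR.
set R := rowR a b p q x c.
have h1 : t <= cnt R c n.
  rewrite cnt_all. apply: (leq_trans hR); apply: subset_leq_card.
  apply/subsetP => z zR; rewrite inE zR /=. by move: zR; rewrite inE => /andP[].
apply: (leq_trans (first_big h1)); apply: subset_leq_card.
apply/subsetP => y; rewrite !inE => /and3P [yR cy hy].
move: yR => /andP [/andP [/andP [ay yb] yact] _].
rewrite yact cy /=.
suff <- : cnt R c y = cnt (act p q x) c y by [].
rewrite /cnt; apply: eq_card => w; rewrite !inE.
case cw: (c <= w) => //=; case wy: (w < y); rewrite /= ?andbF //.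
rewrite /In_ !andbT.
have -> : a x < w by exact: leq_trans ac cw.
have -> : w < b x by exact: ltn_trans wy yb.
by [].
Qed.

Lemma bad_row n t (a b p q : 'I_n -> nat) (x : 'I_n) :
  #|[set c | In_ a b p q x c && (#|rowR a b p q x c| < t)]| <= t.-1.
Proof.
apply: (@inj_card_le _ _ (fun c => (#|rowR a b p q x c|).-1)).
  apply: mono_inj => c1 c2; rewrite !inE => /andP [h1 _] /andP [h2 _] l.
  have pr : rowR a b p q x c2 \proper rowR a b p q x c1.
    apply/properP; split.
      apply/subsetP => z; rewrite !inE => /andP [-> hz]. exact: leq_trans (ltnW l) hz.
    exists c1; first by rewrite inE h1 leqnn.
    by rewrite /rowR inE negb_and -ltnNge l orbT.
  have := proper_card pr.
  have : 0 < #|rowR a b p q x c2|.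
    by apply/card_gt0P; exists c2; rewrite inE h2 leqnn.
  lia.
move=> c; rewrite inE => /andP [h1 h2].
have : 0 < #|rowR a b p q x c| by apply/card_gt0P; exists c; rewrite inE h1 leqnn.
lia.
Qed.

Lemma right_rank n (U : {set 'I_n}) (z : nat) t :
  #|[set c in U | (c <= z) && (cnt U c z < t)]| <= t.
Proof.
apply: (@inj_card_le _ _ (fun c => cnt U c z)).
  apply: mono_inj => c1 c2; rewrite !inE => /and3P [u1 z1 _] /and3P [u2 z2 _] l.
  apply: proper_card; apply/properP; split.
    apply/subsetP => w; rewrite !inE => /and3P [-> hw ->]. by rewrite (leq_trans (ltnW l) hw).
  exists c1; first by rewrite inE u1 leqnn /=; exact: leq_trans l z2.
  by rewrite !inE leqNgt l /= andbF.
by move=> c; rewrite inE => /and3P [].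
Qed.

Definition Dl n (p q : 'I_n -> nat) (x : nat) (z : 'I_n) : bool :=
  (z \in act p q x) != (z \in act p q x.-1).

Lemma inWin n t (p q : 'I_n -> nat) (x c : nat) y :
  (y \in Win t p q x c) = [&& y \in act p q x, c <= y & cnt (act p q x) c y < t].
Proof. by rewrite /Win in_set. Qed.

Lemma change_wit n t (p q : 'I_n -> nat) (x : nat) (c : 'I_n) :
  Win t p q x c != Win t p q x.-1 c ->
  exists z : 'I_n, [&& Dl p q x z, c <= z & cnt (act p q x :|: act p q x.-1) c z < t].
Proof.
set A1 := act p q x; set A0 := act p q x.-1; set U := A1 :|: A0.
move=> hne.
case: (boolP [exists z, [&& Dl p q x z, c <= z & cnt U c z < t]]) => [/existsP //|].
rewrite negb_exists => /forallP H.
case/negP: hne; apply/eqP/setP => y.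
rewrite !inWin -/A1 -/A0.
case: (boolP [exists z : 'I_n, [&& Dl p q x z, c <= z & z <= y]]).
  case/existsP => z hz.
  pose P m := [exists z : 'I_n, (val z == m) && [&& Dl p q x z, c <= z & z <= y]].
  have exP : exists m, P m by exists (val z); apply/existsP; exists z; rewrite eqxx.
  case: (ex_minnP exP) => m /existsP [z0 /andP [/eqP ez0 /and3P [d0 cz0 z0y]]] minm.
  have nd : forall w : 'I_n, c <= w -> w < z0 -> (w \in A1) = (w \in A0).
    move=> w cw wz. apply/eqP. move: (minm (val w)).
    have ez : nat_of_ord z0 = m := ez0.
    case Dw : (Dl p q x w).
      move=> hm. have : m <= w. apply: hm; apply/existsP; exists w.
        rewrite eqxx Dw cw /=. exact: leq_trans (ltnW wz) z0y.
      lia.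
    by move: Dw; rewrite /Dl => /negbT; rewrite negbK.
  have hU : t <= cnt U c z0.
    move: (H z0); rewrite d0 cz0 /=. by rewrite -leqNgt.
  have e1 : cnt A1 c z0 = cnt U c z0.
    rewrite /cnt; apply: eq_card => w; rewrite !inE.
    case cw: (c <= w) => //=; case wz: (w < z0); rewrite /= ?andbF //.
    by have := nd w cw wz; rewrite !inE => ->; rewrite orbb.
  have e0 : cnt A0 c z0 = cnt U c z0.
    rewrite /cnt; apply: eq_card => w; rewrite !inE.
    case cw: (c <= w) => //=; case wz: (w < z0); rewrite /= ?andbF //.
    by have := nd w cw wz; rewrite !inE => ->; rewrite orbb.
  have m1 := cnt_mono A1 c z0y. have m0 := cnt_mono A0 c z0y.
  have -> : cnt A1 c y < t = false by apply/negbTE; rewrite -leqNgt; lia.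
  have -> : cnt A0 c y < t = false by apply/negbTE; rewrite -leqNgt; lia.
  by rewrite !andbF.
rewrite negb_exists => /forallP H2.
have nd : forall w : 'I_n, c <= w -> w <= y -> (w \in A1) = (w \in A0).
  move=> w cw wy. move: (H2 w). rewrite cw wy /= andbT /Dl negbK. by move/eqP.
case cy: (c <= y); last by rewrite !andbF.
rewrite (nd y cy (leqnn _)) /=.
congr (_ && (_ < t)).
rewrite /cnt; apply: eq_card => w; rewrite !inE.
case cw: (c <= w) => //=; case wy: (w < y); rewrite /= ?andbF //.
by have := nd w cw (ltnW wy); rewrite !inE => ->.
Qed.

Lemma img_interval n (T : finType) (f : nat -> T) (lo hi : nat) :
  #|[set f (val x) | x in [set x : 'I_n | lo < x < hi]]| <=
  1 + #|[set x : 'I_n | [&& lo < x.-1, x < hi & f x != f x.-1]]|.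
Proof.
elim: hi => [|hi IH].
  have -> : [set x : 'I_n | lo < x < 0] = set0 by apply/setP => x; rewrite !inE ltn0 andbF.
  by rewrite imset0 cards0.
have Chm : #|[set x : 'I_n | [&& lo < x.-1, x < hi & f x != f x.-1]]| <=
           #|[set x : 'I_n | [&& lo < x.-1, x < hi.+1 & f x != f x.-1]]|.
  apply: subset_leq_card; apply/subsetP => x; rewrite !inE => /and3P [-> h ->].
  by rewrite ltnS ltnW.
have gen : [set f (val x) | x in [set x : 'I_n | lo < x < hi.+1]] \subset
           f hi |: [set f (val x) | x in [set x : 'I_n | lo < x < hi]].
  apply/subsetP => y /imsetP [x]; rewrite inE ltnS [x <= hi]leq_eqVlt => /andP [lx /orP [/eqP ex|lt]] ->.
    by have -> : val x = hi := ex; rewrite setU11.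
  by rewrite setU1r //; apply: imset_f; rewrite inE lx lt.
case: (ltnP hi n) => hn; last first.
  have -> : [set x : 'I_n | lo < x < hi.+1] = [set x : 'I_n | lo < x < hi].
    apply/setP => x; rewrite !inE. have := ltn_ord x. case: (lo < x) => //=. lia.
  exact: leq_trans IH (leq_add (leqnn 1) Chm).
case: (leqP hi lo.+1) => hl.
  apply: leq_trans (_ : 1 <= _); last by rewrite leq_addr.
  apply: leq_trans (subset_leq_card gen) _.
  have -> : [set x : 'I_n | lo < x < hi] = set0.
    apply/setP => x; rewrite !inE. lia.
  by rewrite imset0 setU0 cards1.
case: (boolP (f hi == f hi.-1)) => /eqP fe.
  have hp : hi.-1 < n by lia.
  have sub : [set f (val x) | x in [set x : 'I_n | lo < x < hi.+1]] \subset
             [set f (val x) | x in [set x : 'I_n | lo < x < hi]].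
    apply: (subset_trans gen); apply/subsetP => y; rewrite in_setU1 => /orP [/eqP ->|//].
    rewrite fe. apply/imsetP; exists (Ordinal hp) => //. rewrite inE /=. lia.
  exact: leq_trans (subset_leq_card sub) (leq_trans IH (leq_add (leqnn 1) Chm)).
have -> : [set x : 'I_n | [&& lo < x.-1, x < hi.+1 & f x != f x.-1]] =
          Ordinal hn |: [set x : 'I_n | [&& lo < x.-1, x < hi & f x != f x.-1]].
  apply/setP => x; rewrite !inE -val_eqE /=. case: x => x hx /=.
  case: (boolP (x == hi)) => [/eqP ->|ne] /=.
    rewrite ltnSn. have -> : lo < hi.-1 by lia. by move/eqP: fe => ->.
  by rewrite ltnS [x <= hi]leq_eqVlt (negbTE ne).
rewrite cardsU1 !inE /= ltnn !andbF /=.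
apply: leq_trans (subset_leq_card gen) _.
rewrite cardsU1. apply: leq_trans (leq_add (leq_b1 _) IH) _. by rewrite addnA.
Qed.

Definition NoK n t (a b p q : 'I_n -> nat) :=
  ~ (exists S T : {set 'I_n}, #|S| = t /\ #|T| = t /\
       (forall x y, x \in S -> y \in T -> In_ a b p q x y)).

Lemma fiber_bound n t (a b p q : 'I_n -> nat) (c : 'I_n) (V : {set 'I_n}) :
  0 < t -> NoK t a b p q ->
  #|[set x | good t a b p q x c && (Win t p q x c == V)]| <= t.-1.
Proof.
move=> t0 nk. rewrite leqNgt; apply/negP => h.
have ht : t <= #|[set x | good t a b p q x c && (Win t p q x c == V)]| by lia.
case: (sub_card_t ht) => S [SF cS].
have : 0 < #|S| by lia.
case/card_gt0P => x0 x0S.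
have := subsetP SF _ x0S; rewrite inE => /andP [g0 /eqP W0].
have := win_big g0; rewrite W0 => hV.
case: (sub_card_t hV) => T0 [TV cT].
apply: nk; exists S, T0; split => //; split => // x y xS yT.
have := subsetP SF _ xS; rewrite inE => /andP [gx /eqP Wx].
have := subsetP (win_sub_row gx) y. rewrite Wx inE. apply. exact: subsetP TV _ yT.
Qed.

Definition Ch n t (p q : 'I_n -> nat) (c : 'I_n) : {set 'I_n} :=
  [set x : 'I_n | [&& p c < x.-1, x < q c & Win t p q x c != Win t p q x.-1 c]].

Lemma col_bound n t (a b p q : 'I_n -> nat) (c : 'I_n) :
  0 < t -> NoK t a b p q ->
  #|[set x | good t a b p q x c]| <= t.-1 * (1 + #|Ch t p q c|).
Proof.
move=> t0 nk.
set G := [set x | good t a b p q x c].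
rewrite -sum1_card (partition_big_imset (fun x : 'I_n => Win t p q x c)) /=.
apply: (@leq_trans (\sum_(j in [set Win t p q x c | x : 'I_n in G]) t.-1)).
  apply: leq_sum => V _. rewrite sum1_card.
  apply: leq_trans _ (fiber_bound c V t0 nk). apply: subset_leq_card.
  by apply/subsetP => x; rewrite unfold_in /= !inE.
rewrite sum_nat_const mulnC leq_mul2l; apply/orP; right.
have hI := img_interval n (fun m => Win t p q m c) (p c) (q c).
rewrite /= in hI. rewrite /Ch. apply: leq_trans _ hI.
apply: subset_leq_card. apply/subsetP => V /imsetP [x xG ->].
apply/imsetP; exists x => //. move: xG; rewrite !inE.
by case/andP => /andP [_ ->].
Qed.

Lemma dl_col n (p q : 'I_n -> nat) (z : 'I_n) : \sum_(x : 'I_n) (Dl p q x z : nat) <= 2.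
Proof.
apply: leq_trans (_ : \sum_(x : 'I_n) ((val x == (p z).+1) + (val x == q z)) <= _).
  apply: leq_sum => x _. rewrite /Dl !inE. case: x => x hx /=. lia.
rewrite big_split /= -!card_sum.
exact: leq_add (card_val_eq _ _) (card_val_eq _ _).
Qed.

Lemma changes_bound n t (p q : 'I_n -> nat) :
  \sum_(c : 'I_n) #|Ch t p q c| <= 2 * t * n.
Proof.
set U := fun x : nat => act p q x :|: act p q x.-1.
apply: leq_trans (_ : \sum_(c : 'I_n) \sum_(x : 'I_n) \sum_(z : 'I_n)
   ((Dl p q x z && [&& c \in U x, c <= z & cnt (U x) c z < t]) : nat) <= _).
  apply: leq_sum => c _. rewrite card_sum. apply: leq_sum => x _.
  rewrite inE. case hC: [&& _, _ & _] => //.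
  case/and3P: hC => h1 h2 h3.
  case: (change_wit h3) => z /and3P [dz cz hz].
  rewrite (bigD1 z) //= dz cz hz /=.
  have -> : c \in act p q x by rewrite inE; lia.
  by [].
rewrite exchange_big /=.
apply: leq_trans (_ : \sum_(x : 'I_n) \sum_(z : 'I_n) (Dl p q x z * t) <= _).
  apply: leq_sum => x _. rewrite exchange_big /=. apply: leq_sum => z _.
  case: (Dl p q x z) => /=; last by rewrite big1.
  rewrite mul1n -card_sum.
  apply: leq_trans (right_rank (U x) z t). apply: subset_leq_card.
  by apply/subsetP => c; rewrite !inE.
rewrite exchange_big /=.
apply: leq_trans (_ : \sum_(z : 'I_n) 2 * t <= _).
  apply: leq_sum => z _. rewrite -big_distrl /= leq_mul2r. by rewrite dl_col orbT.
by rewrite sum_nat_const card_ord mulnC.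
Qed.

Lemma AB n t (a b p q : 'I_n -> nat) : 0 < t -> NoK t a b p q ->
  #|[set z : 'I_n * 'I_n | In_ a b p q z.1 z.2]| <= t.-1 * n + t.-1 * (n + 2 * t * n).
Proof.
move=> t0 nk. rewrite card_pairs.
apply: leq_trans (_ : \sum_(x : 'I_n) \sum_(y : 'I_n)
   ((good t a b p q x y : nat) + (In_ a b p q x y && (#|rowR a b p q x y| < t))) <= _).
  apply: leq_sum => x _; apply: leq_sum => y _. rewrite /good.
  case: (In_ a b p q x y) => //=; lia.
under eq_bigr => x _ do rewrite big_split /=.
rewrite big_split /= addnC. apply: leq_add.
  apply: leq_trans (_ : \sum_(x : 'I_n) t.-1 <= _).
    apply: leq_sum => x _. rewrite -card_sum. exact: bad_row.
  by rewrite sum_nat_const card_ord mulnC.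
rewrite exchange_big /=.
apply: leq_trans (_ : \sum_(c : 'I_n) t.-1 * (1 + #|Ch t p q c|) <= _).
  apply: leq_sum => c _. rewrite -card_sum. exact: col_bound.
rewrite -big_distrr /= leq_mul2l big_split /= sum_nat_const card_ord muln1.
by rewrite leq_add2l changes_bound orbT.
Qed.

Definition lvl (k x y : nat) : bool :=
  (x %/ 2^k %% 2 == 0) && (y %/ 2^k == (x %/ 2^k).+1).
Definition Np n (e : rel 'I_n) k (x : 'I_n) : {set 'I_n} := [set y | e x y && lvl k x y].
Definition Nm n (e : rel 'I_n) k (y : 'I_n) : {set 'I_n} := [set x | e x y && lvl k x y].
Definition mxs n (A : {set 'I_n}) : nat := \max_(y in A) (val y).
Definition mns n (A : {set 'I_n}) : nat := n - \max_(y in A) (n - val y).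

Lemma mxs_ge n (A : {set 'I_n}) (y : 'I_n) : y \in A -> val y <= mxs A.
Proof. move=> yA; rewrite /mxs; exact: leq_bigmax_cond. Qed.

Lemma mns_le n (A : {set 'I_n}) (y : 'I_n) : y \in A -> mns A <= val y.
Proof.
move=> yA; have : n - val y <= \max_(y in A) (n - val y) by apply: leq_bigmax_cond.
rewrite /mns. have : val y < n := ltn_ord y. lia.
Qed.

Lemma mxs_in n (A : {set 'I_n}) : 0 < #|A| -> exists2 y, y \in A & val y = mxs A.
Proof.
move=> h; case: (eq_bigmax_cond (fun y : 'I_n => val y) h) => y yA e.
by exists y.
Qed.

Lemma mns_in n (A : {set 'I_n}) : 0 < #|A| -> exists2 y, y \in A & val y = mns A.
Proof.
move=> h; case: (eq_bigmax_cond (fun y : 'I_n => n - val y) h) => y yA e.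
exists y => //. rewrite /mns e. by rewrite subKn // ltnW // ltn_ord.
Qed.

Lemma mns_nonempty n (A : {set 'I_n}) : mns A < n -> 0 < #|A|.
Proof.
move=> h; rewrite lt0n; apply/negP => /eqP /card0_eq A0.
move: h; rewrite /mns big_pred0 // subn0 ltnn //.
Qed.

Lemma div_lt m1 m2 d : m1 %/ d < m2 %/ d -> m1 < m2.
Proof. rewrite !ltnNge => h; apply/negP => /(leq_div2r d) h2. by rewrite h2 in h. Qed.


Lemma In_dc n (e : rel 'I_n) k (x y : 'I_n) : symmetric e ->
  In_ (fun x => mns (Np e k x)) (fun x => mxs (Np e k x))
      (fun y => mns (Nm e k y)) (fun y => mxs (Nm e k y)) x y ->
  x != y /\ dcherry_uv e x y.
Proof.
move=> sym /andP [/andP [h1 h2] /andP [h3 h4]].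
have n1 : 0 < #|Np e k x| by apply: mns_nonempty; have := ltn_ord y; lia.
have n2 : 0 < #|Nm e k y| by apply: mns_nonempty; have := ltn_ord x; lia.
case: (mns_in n1) => v1; rewrite inE => /andP [ev1 lv1] ev1'.
case: (mxs_in n1) => v2; rewrite inE => /andP [ev2 lv2] ev2'.
case: (mns_in n2) => u1; rewrite inE => /andP [eu1 lu1] eu1'.
case: (mxs_in n2) => u2; rewrite inE => /andP [eu2 lu2] eu2'.
have xu1 : u1 < x by rewrite eu1'.
have xu2 : x < u2 by rewrite eu2'.
have yv1 : v1 < y by rewrite ev1'.
have yv2 : y < v2 by rewrite ev2'.
have uv : u2 < v1.
  apply: (@div_lt _ _ (2^k)).
  have d1 := leq_div2r (2^k) (ltnW xu1).
  have d2 := leq_div2r (2^k) (ltnW xu2).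
  move: lv1 lu1 lu2 d1 d2; rewrite /lvl.
  set X := x %/ 2^k; set Y := y %/ 2^k; set U1 := u1 %/ 2^k; set U2 := u2 %/ 2^k;
  set V1 := v1 %/ 2^k. lia.
split.
  rewrite neq_ltn; apply/orP; left. exact: ltn_trans xu2 (ltn_trans uv yv1).
exists u1, u2, v1, v2; split; first by split.
split => //; by rewrite sym.
Qed.

Lemma level_exists x y : x < y -> exists k, lvl k x y /\ 2^k <= y.
Proof.
move=> xy.
pose P j := x %/ 2^j == y %/ 2^j.
have exP : exists j, P j.
  have hy : y < 2 ^ y.+1 := ltnW (@ltn_expl 2 y.+1 isT).
  exists y.+1; rewrite /P !divn_small //. exact: ltn_trans xy hy.
case: (ex_minnP exP) => j Pj minj.
case: j Pj minj => [|k] Pj minj.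
  by move: Pj; rewrite /P expn0 !divn1 => /eqP e; move: xy; rewrite e ltnn.
have nPk : ~~ P k.
  apply/negP => Pk. have := minj k Pk. by rewrite ltnn.
move: Pj nPk; rewrite /P expnSr !divnMA.
have d := leq_div2r (2^k) (ltnW xy).
set X := x %/ 2^k; set Y := y %/ 2^k => h1 h2.
have [hX hY] : X %% 2 = 0 /\ Y = X.+1 by lia.
exists k; split.
  by rewrite /lvl -/X -/Y hX hY !eqxx.
have : 1 <= Y by lia.
rewrite /Y leq_divRL ?expn_gt0 // mul1n. by [].
Qed.

Lemma cardU_le (T : finType) (A B : {set T}) : #|A :|: B| <= #|A| + #|B|.
Proof. rewrite cardsU; exact: leq_subr. Qed.

Lemma card_graph1 n (f : 'I_n -> nat) : #|[set z : 'I_n * 'I_n | val z.2 == f z.1]| <= n.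
Proof.
rewrite (card_pairs (fun x y : 'I_n => val y == f x)).
apply: leq_trans (_ : \sum_(x : 'I_n) 1 <= _); last by rewrite sum_nat_const card_ord muln1.
apply: leq_sum => x _. rewrite -card_sum. exact: card_val_eq.
Qed.

Lemma card_graph2 n (f : 'I_n -> nat) : #|[set z : 'I_n * 'I_n | val z.1 == f z.2]| <= n.
Proof.
rewrite (card_pairs (fun x y : 'I_n => val x == f y)) exchange_big /=.
apply: leq_trans (_ : \sum_(x : 'I_n) 1 <= _); last by rewrite sum_nat_const card_ord muln1.
apply: leq_sum => x _. rewrite -card_sum. exact: card_val_eq.
Qed.

Definition Elev n (e : rel 'I_n) k : {set 'I_n * 'I_n} :=
  [set z | e z.1 z.2 && lvl k z.1 z.2].

Lemma level_bound n (e : rel 'I_n) k :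
  #|Elev e k| <= #|[set z : 'I_n * 'I_n |
     In_ (fun x => mns (Np e k x)) (fun x => mxs (Np e k x))
      (fun y => mns (Nm e k y)) (fun y => mxs (Nm e k y)) z.1 z.2]| + 4 * n.
Proof.
set a := (fun x => mns (Np e k x)); set b := (fun x => mxs (Np e k x)).
set p := (fun y => mns (Nm e k y)); set q := (fun y => mxs (Nm e k y)).
set I0 := [set z : 'I_n * 'I_n | In_ a b p q z.1 z.2].
have g1 := card_graph1 a; have g2 := card_graph1 b.
have g3 := card_graph2 p; have g4 := card_graph2 q.
set X1 := [set z : 'I_n * 'I_n | val z.2 == a z.1] in g1.
set X2 := [set z : 'I_n * 'I_n | val z.2 == b z.1] in g2.
set X3 := [set z : 'I_n * 'I_n | val z.1 == p z.2] in g3.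
set X4 := [set z : 'I_n * 'I_n | val z.1 == q z.2] in g4.
have sub : Elev e k \subset I0 :|: X1 :|: X2 :|: X3 :|: X4.
  apply/subsetP => [[x y]]; rewrite !inE /= => h.
  have yN : y \in Np e k x by rewrite inE.
  have xN : x \in Nm e k y by rewrite inE.
  have := mns_le yN; have := mxs_ge yN; have := mns_le xN; have := mxs_ge xN.
  rewrite /In_ /a /b /p /q /=. lia.
apply: leq_trans (subset_leq_card sub) _.
have c1 := cardU_le (I0 :|: X1 :|: X2 :|: X3) X4.
have c2 := cardU_le (I0 :|: X1 :|: X2) X3.
have c3 := cardU_le (I0 :|: X1) X2.
have c4 := cardU_le I0 X1.
apply: (leq_trans c1); rewrite -?addnA.
apply: (leq_trans (leq_add c2 (leqnn _))); rewrite -?addnA.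
apply: (leq_trans (leq_add c3 (leqnn _))); rewrite -?addnA.
apply: (leq_trans (leq_add c4 (leqnn _))); rewrite -?addnA leq_add2l.
apply: (leq_trans (leq_add g1 (leq_add g2 (leq_add g3 g4)))).
by rewrite !mulSn mul0n addn0.
Qed.

Lemma card_bigcup_le (T : finType) m (F : nat -> {set T}) :
  #|\bigcup_(k < m) F k| <= \sum_(k < m) #|F k|.
Proof.
elim: m => [|m IH]; first by rewrite !big_ord0 cards0.
rewrite !big_ord_recr /=. apply: leq_trans (cardU_le _ _) _.
by rewrite leq_add2r.
Qed.

Lemma num_edges_le n (e : rel 'I_n) :
  num_edges e <= \sum_(k < (trunc_log 2 n).+1) #|Elev e k|.
Proof.
apply: leq_trans (card_bigcup_le _ (fun k => Elev e k)).
apply: subset_leq_card; apply/subsetP => [[x y]]; rewrite inE /= => /andP [xy exy].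
case: (level_exists xy) => k [lk hk].
apply/bigcupP.
have kL : k < (trunc_log 2 n).+1.
  rewrite ltnS; apply: trunc_log_max => //. exact: leq_trans hk (ltnW (ltn_ord y)).
exists (Ordinal kL) => //. by rewrite inE /= exy lk.
Qed.

Lemma nat_bound t n (e : rel 'I_n) : 0 < t -> symmetric e ->
  ~ (exists S T : {set 'I_n}, #|S| = t /\ #|T| = t /\
       (forall s w, s \in S -> w \in T -> double_cherry e s w)) ->
  num_edges e <= (trunc_log 2 n).+1 * (t.-1 * n + t.-1 * (n + 2 * t * n) + 4 * n).
Proof.
move=> t0 sym NG.
apply: leq_trans (num_edges_le e) _.
apply: leq_trans (_ : \sum_(k < (trunc_log 2 n).+1) (t.-1 * n + t.-1 * (n + 2 * t * n) + 4 * n) <= _); last first.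
  by rewrite sum_nat_const card_ord.
apply: leq_sum => k _.
apply: leq_trans (level_bound e k) _. rewrite leq_add2r.
apply: AB => //.
move=> [S [T [hS [hT H]]]]. apply: NG. exists S, T. split => //; split => // s w sS wT.
case: (In_dc sym (H s w sS wT)) => ne dc. split => //. right; left. exact: dc.
Qed.

From Stdlib Require Import Reals Lra.

Lemma INR_expn2 L : INR (expn 2 L) = (2 ^ L)%R.
Proof.
elim: L => [|L IH]; first by rewrite expn0 /=.
rewrite expnS -multE mult_INR IH /=. lra.
Qed.

Unset Implicit Arguments.

Theorem corollary3p3 (t : nat) (ht : (0 < t)%N) :
  exists C : R, forall (n : nat) (e : rel 'I_n),
    (2 <= n)%N ->
    simple_graph e ->
    ~ (exists S T : {set 'I_n},
          #|S| = t /\ #|T| = t /\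
          (forall s w, s \in S -> w \in T -> double_cherry e s w)) ->
    (INR (num_edges e) <= C * INR n * ln (INR n))%R.
Proof.
set K := t.-1 * (2 + 2 * t) + 4.
exists (2 * INR K / ln 2)%R => n e n2 [sym _] NG.
set L := trunc_log 2 n.
have L1 : 0 < L by rewrite /L trunc_log_gt0.
have hb := nat_bound ht sym NG.
have hb2 : num_edges e <= L * (K * n) * 2.
  apply: leq_trans hb _. rewrite -/L.
  have -> : t.-1 * n + t.-1 * (n + 2 * t * n) + 4 * n = K * n by rewrite /K; lia.
  move: L1; clear; move: (K * n) => X h; nia.
have pL : expn 2 L <= n by apply: trunc_logP; lia.
have l2 : (0 < ln 2)%R.
  rewrite -ln_1; apply: ln_increasing; lra.
have hL : (INR L * ln 2 <= ln (INR n))%R.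
  rewrite -ln_pow; last lra.
  rewrite -INR_expn2.
  have hp : (0 < INR (expn 2 L))%R by apply: lt_0_INR; apply/ltP; rewrite expn_gt0.
  case: (Rle_lt_or_eq_dec _ _ (le_INR _ _ (elimT leP pL))) => h.
    by apply: Rlt_le; apply: ln_increasing.
  by rewrite h; apply: Rle_refl.
have H2 : (INR L <= ln (INR n) * / ln 2)%R.
  apply: (Rmult_le_reg_r (ln 2)) => //.
  replace (ln (INR n) * / ln 2 * ln 2)%R with (ln (INR n)) by (field; lra).
  exact: hL.
have hR : (INR (num_edges e) <= INR L * (INR K * INR n) * 2)%R.
  have := le_INR _ _ (elimT leP hb2). by rewrite -!multE !mult_INR.
apply: (Rle_trans _ _ _ hR).
have pK : (0 <= INR K * INR n)%R by apply: Rmult_le_pos; apply: pos_INR.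
replace (2 * INR K / ln 2 * INR n * ln (INR n))%R with
  ((ln (INR n) * / ln 2) * (INR K * INR n) * 2)%R by (field; lra).
apply: Rmult_le_compat_r; first lra.
exact: Rmult_le_compat_r.
Qed.
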